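(* Let $Z$ be a reflection positive volume-dependent field theory, let $\Sigma_0,\Sigma_1$ be nonempty closed $(n-1)$-manifolds, and for each $\lambda\in\Lambda_{\Sigma_0,\Sigma_1}$ let $f_\lambda:\mathcal H^\lambda_{\Sigma_0}\to\mathcal H^\lambda_{\Sigma_1}$ be a linear map. Then the not necessarily bounded operator $f^{Hilb}=\sum_{\lambda\in\Lambda_{\Sigma_0,\Sigma_1}}\iota_{1,\lambda}\circ f_\lambda\circ\pi_{0,\lambda}$ from $\mathcal H_{\Sigma_0}$ to $\mathcal H_{\Sigma_1}$ is induced from a morphism of nuclear pairs $(\check f,\hat f)$ from $\check E_{\Sigma_0}\subset\mathcal H_{\Sigma_0}\subset\hat E_{\Sigma_0}$ to $\check E_{\Sigma_1}\subset\mathcal H_{\Sigma_1}\subset\hat E_{\Sigma_1}$ (i.e. continuous $\check f:\check E_{\Sigma_0}\to\check E_{\Sigma_1}$, $\hat f:\hat E_{\Sigma_0}\to\hat E_{\Sigma_1}$ commuting with the inclusions, with $f^{Hilb}$ equal to $\check f$ on $\check E_{\Sigma_0}$) if and only if for all $t>0$ there exists $C>0$ with $\|f_\lambda\|<Ce^{t\lambda}$ for every $\lambda\in\Lambda_{\Sigma_0,\Sigma_1}$.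
   Context: A reflection positive volume-dependent field theory $Z$ (a nuclear, holomorphic, coherent symmetric monoidal functor from $n$-dimensional bordisms of germs equipped with complex densities of positive real part to nuclear pairs — continuous injective dense maps from nuclear dual Fréchet to nuclear Fréchet spaces — which is equivariant for reflection/conjugation and sends reflection-fixed objects to Hermitian nuclear pairs) assigns to each closed $(n-1)$-manifold $\Sigma$ (using a fixed translation-invariant density $\nu_\Sigma\wedge dt$ on $\Sigma\times\mathbb R$, $\nu_\Sigma$ positive of volume 1) a Hilbert space $\mathcal H_\Sigma$ and a self-adjoint operator $H_\Sigma$ with discrete spectrum bounded below and finite-dimensional eigenspaces $\mathcal H_\Sigma^\lambda$, such that cylinders $\Sigma\times I$ of complex volume $s$ act by $\exp(-sH_\Sigma)$; for disconnected $\Sigma$, $\mathcal H_\Sigma$ is the tensor product over components and $H_\Sigma$ the sum of the component Hamiltonians. The Hermitian nuclear pair assigned to $\Sigma$ is $\check E_\Sigma\subset\mathcal H_\Sigma\subset\hat E_\Sigma$ where, writing elements as families $(v_\lambda)\in\prod_{\lambda\in\mathrm{Spec}(H_\Sigma)}\mathcal H^\lambda_\Sigma$: $\check E_\Sigma=\{(v_\lambda):\exists\tau\in\mathbb C_{>0},\ (e^{\tau\lambda}v_\lambda)\in\mathcal H_\Sigma\}$ (colimit of copies of $\mathcal H_\Sigma$ under $e^{-\tau H_\Sigma}$) and $\hat E_\Sigma=\{(v_\lambda):\forall\tau\in\mathbb C_{>0},\ (e^{-\tau\lambda}v_\lambda)\in\mathcal H_\Sigma\}$ with the Fréchet topology given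 by the seminorms $(v_\lambda)\mapsto\|(e^{-\tau_i\lambda}v_\lambda)\|$ for a sequence $\tau_i$ with real parts decreasing to $0$. $\Lambda_{\Sigma_0,\Sigma_1}=\mathrm{Spec}(H_{\Sigma_0})\cap\mathrm{Spec}(H_{\Sigma_1})$; $\pi_{k,\lambda}:\mathcal H_{\Sigma_k}\to\mathcal H^\lambda_{\Sigma_k}$ is the orthogonal projection and $\iota_{k,\lambda}$ the inclusion. *)

(* Defs.v *)
From HB Require Import structures.
From mathcomp Require Import all_boot all_order all_algebra.
From mathcomp Require Import complex.
From mathcomp Require Import all_classical all_reals all_analysis.
Unset Printing Implicit Defensive.
Import Order.TTheory GRing.Theory Num.Theory.
Local Open Scope ring_scope.
Local Open Scope classical_set_scope.

Section SpectralData.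
Variable R : realType.

(* The eigenspace H^l of dimension d l is modelled (via an orthonormal basis)
   as C^(d l) = 'cV[R[i]]_(d l) with its standard Hermitian inner product. *)

Definition sqnorm (n : nat) (v : 'cV[R[i]]_n) : R :=
  \sum_(i < n) (complex.Re (v i 0) ^+ 2 + complex.Im (v i 0) ^+ 2).

Definition opnorm (m n : nat) (A : 'M[R[i]]_(m, n)) : R :=
  sup [set x : R | exists2 v : 'cV[R[i]]_n, sqnorm _ v <= 1 &
                     x = Num.sqrt (sqnorm _ (A *m v))].

Definition spectrum (d : R -> nat) : set R := [set l | (0 < d l)%N].

(* discrete spectrum, bounded below, finite-dimensional eigenspaces *)
Definition discrete_spectral_data (d : R -> nat) : Prop :=
  forall c : R, finite_set [set l | (0 < d l)%N /\ l <= c].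

Definition fam (d : R -> nat) := forall l : R, 'cV[R[i]]_(d l).

Definition wnorm2 (d : R -> nat) (tau : R) (v : fam d) : \bar R :=
  \esum_(l in [set: R]) (expR (2 * tau * l) * sqnorm _ (v l))%:E.

Definition Hilb (d : R -> nat) : set (fam d) :=
  [set v | (wnorm2 d 0 v < +oo)%E].

Definition Echeck (d : R -> nat) : set (fam d) :=
  [set v | exists2 tau : R, 0 < tau & (wnorm2 d tau v < +oo)%E].

Definition Ehat (d : R -> nat) : set (fam d) :=
  [set v | forall tau : R, 0 < tau -> (wnorm2 d (- tau) v < +oo)%E].

Definition linear_on (d0 d1 : R -> nat) (P : set (fam d0))
  (f : fam d0 -> fam d1) : Prop :=
  forall (a : R[i]) (u v : fam d0), P u -> P v ->
    f (fun l => a *: u l + v l) = (fun l => a *: f u l + f v l).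

(* continuity of a linear map E-check_0 -> E-check_1 (colimit topology):
   each step H_tau = {v | wnorm2 tau v < oo} maps boundedly into some step *)
Definition cont_check (d0 d1 : R -> nat) (f : fam d0 -> fam d1) : Prop :=
  forall tau : R, 0 < tau -> exists2 tau' : R, 0 < tau' &
    exists2 C : R, 0 < C & forall v : fam d0, (wnorm2 d0 tau v < +oo)%E ->
      (wnorm2 d1 tau' (f v) <= C%:E * wnorm2 d0 tau v)%E.

(* continuity of a linear map E-hat_0 -> E-hat_1 (Frechet topology given by
   the seminorms v |-> ||(e^{-tau l} v_l)||, tau > 0) *)
Definition cont_hat (d0 d1 : R -> nat) (f : fam d0 -> fam d1) : Prop :=
  forall tau' : R, 0 < tau' -> exists2 tau : R, 0 < tau &
    exists2 C : R, 0 < C & forall v : fam d0, Ehat d0 v ->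
      (wnorm2 d1 (- tau') (f v) <= C%:E * wnorm2 d0 (- tau) v)%E.

Definition nuclear_pair_morphism (d0 d1 : R -> nat)
  (fcheck fhat : fam d0 -> fam d1) : Prop :=
  [/\ (forall v, Echeck d0 v -> Echeck d1 (fcheck v)),
      (forall v, Ehat d0 v -> Ehat d1 (fhat v)),
      linear_on _ _ (Echeck d0) fcheck /\ linear_on _ _ (Ehat d0) fhat,
      cont_check _ _ fcheck /\ cont_hat _ _ fhat &
      (* commutes with the inclusions E-check into E-hat *)
      forall v, Echeck d0 v -> fhat v = fcheck v].

(* f^Hilb = sum_{l in Lambda} iota_{1,l} o f_l o pi_{0,l}; for l outside
   Lambda = Spec0 cap Spec1 the matrix f l has a zero dimension, so is 0. *)
Definition fHilb (d0 d1 : R -> nat) (f : forall l : R, 'M[R[i]]_(d1 l, d0 l))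
  (v : fam d0) : fam d1 := fun l => f l *m v l.

End SpectralData.
Arguments sqnorm {R n}.
Arguments opnorm {R m n}.
Arguments spectrum {R}.
Arguments discrete_spectral_data {R}.
Arguments fam {R}.
Arguments wnorm2 {R}.
Arguments Hilb {R}.
Arguments Echeck {R}.
Arguments Ehat {R}.
Arguments linear_on {R d0 d1}.
Arguments cont_check {R d0 d1}.
Arguments cont_hat {R d0 d1}.
Arguments nuclear_pair_morphism {R d0 d1}.
Arguments fHilb {R d0 d1}.

(* Main.v *)
Require Import Defs.
From HB Require Import structures.
From mathcomp Require Import all_boot all_order all_algebra.
From mathcomp Require Import complex.
From mathcomp Require Import all_classical all_reals all_analysis.
From mathcomp Require Import ring lra.
Import Order.TTheory GRing.Theory Num.Theory.
Local Open Scope ring_scope.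
Local Open Scope classical_set_scope.
Set Implicit Arguments. Unset Strict Implicit.
Section Aux.
Variable R : realType.

Definition nz (z : R[i]) : R := complex.Re z ^+ 2 + complex.Im z ^+ 2.

Lemma nz_ge0 z : 0 <= nz z.
Proof. by rewrite /nz addr_ge0 // sqr_ge0. Qed.

Lemma nzM (z w : R[i]) : nz (z * w) = nz z * nz w.
Proof. case: z => a b; case: w => c d; rewrite /nz /=; ring. Qed.

Lemma nzD (z w : R[i]) : nz (z + w) <= 2 * (nz z + nz w).
Proof.
case: z => a b; case: w => c d; rewrite /nz /=.
have h1 := sqr_ge0 (a - c); have h2 := sqr_ge0 (b - d).
rewrite -subr_ge0; apply: le_trans (addr_ge0 h1 h2) _; rewrite le_eqVlt; apply/orP; left; apply/eqP; ring.
Qed.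

Lemma nz0 : nz 0 = 0.
Proof. by rewrite /nz /= expr0n /= addr0. Qed.

Lemma nzC (c : R) : nz (Complex c 0) = c ^+ 2.
Proof. by rewrite /nz /= expr0n /= addr0. Qed.

Lemma nz_sum n (z : 'I_n -> R[i]) :
  nz (\sum_(i < n) z i) <= 2 ^+ n * \sum_(i < n) nz (z i).
Proof.
elim: n z => [|n IH] z; first by rewrite !big_ord0 nz0.
rewrite !big_ord_recr /=.
apply: le_trans (nzD _ _) _.
have h1 := IH (fun i => z (widen_ord (leqnSn n) i)).
have h2 : 0 <= \sum_(i < n) nz (z (widen_ord (leqnSn n) i)) by apply: sumr_ge0 => i0 _; apply: nz_ge0.
have h3 := nz_ge0 (z ord_max).
have h4 : 1 <= 2 ^+ n :> R by rewrite exprn_ege1 // ler1n.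
rewrite exprS; nra.
Qed.

Lemma sqnorm_ge0 n (v : 'cV[R[i]]_n) : 0 <= sqnorm v.
Proof. by apply: sumr_ge0 => i _; apply: nz_ge0. Qed.

Lemma nz_le_sqnorm n (v : 'cV[R[i]]_n) j : nz (v j 0) <= sqnorm v.
Proof.
rewrite /sqnorm (bigD1 j) //= -/(nz _) lerDl.
by apply: sumr_ge0 => i _; apply: nz_ge0.
Qed.

Lemma sqnorm0 n : sqnorm (0 : 'cV[R[i]]_n) = 0.
Proof. by rewrite /sqnorm big1 // => i _; rewrite mxE -/(nz _) nz0. Qed.

Lemma sqnorm_dim0 n (w : 'cV[R[i]]_n) : n = 0%N -> sqnorm w = 0.
Proof. by move=> E; subst n; rewrite /sqnorm big_ord0. Qed.

Lemma mul_dim0 m n (A : 'M[R[i]]_(m, n)) (w : 'cV[R[i]]_n) : n = 0%N -> A *m w = 0.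
Proof. by move=> E; subst n; rewrite flatmx0 mulmx0. Qed.

Lemma sqnormZ n (c : R) (v : 'cV[R[i]]_n) : sqnorm (Complex c 0 *: v) = c ^+ 2 * sqnorm v.
Proof.
rewrite /sqnorm mulr_sumr; apply: eq_bigr => i _.
by rewrite mxE -!/(nz _) nzM nzC.
Qed.

Lemma sqnorm_bounded m n (A : 'M[R[i]]_(m, n)) (v : 'cV[R[i]]_n) :
  sqnorm v <= 1 ->
  sqnorm (A *m v) <= \sum_(i < m) 2 ^+ n * \sum_(j < n) nz (A i j).
Proof.
move=> hv; rewrite /sqnorm; apply: ler_sum => i _.
rewrite -/(nz _) mxE. have h := @nz_sum n (fun j => A i j * v j 0).
apply: le_trans h _.
apply: ler_wpM2l; first by apply: exprn_ge0.
apply: ler_sum => j _; rewrite nzM.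
rewrite -[X in _ <= X]mulr1; apply: ler_wpM2l; first exact: nz_ge0.
apply: le_trans _ hv; apply: nz_le_sqnorm.
Qed.

Lemma opnorm_hub m n (A : 'M[R[i]]_(m, n)) :
  has_ubound [set x : R | exists2 v : 'cV[R[i]]_n, sqnorm v <= 1 &
                     x = Num.sqrt (sqnorm (A *m v))].
Proof.
exists (Num.sqrt (\sum_(i < m) 2 ^+ n * \sum_(j < n) nz (A i j))) => _ [v hv ->].
rewrite ler_sqrt; first exact: sqnorm_bounded.
by apply: sumr_ge0 => i _; apply: mulr_ge0; [apply: exprn_ge0|apply: sumr_ge0 => i0 _; apply: nz_ge0].
Qed.

Lemma opnorm_ub m n (A : 'M[R[i]]_(m, n)) v : sqnorm v <= 1 ->
  Num.sqrt (sqnorm (A *m v)) <= opnorm A.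
Proof. by move=> hv; have := ub_le_sup (opnorm_hub A); apply; exists v. Qed.

Lemma opnorm_ge0 m n (A : 'M[R[i]]_(m, n)) : 0 <= opnorm A.
Proof.
apply: le_trans (opnorm_ub A (v := 0) _); first exact: sqrtr_ge0.
by rewrite sqnorm0.
Qed.

Lemma opnorm_bound m n (A : 'M[R[i]]_(m, n)) (v : 'cV[R[i]]_n) :
  sqnorm (A *m v) <= opnorm A ^+ 2 * sqnorm v.
Proof.
have op0 := opnorm_ge0 A.
have main : forall e, 0 < e -> sqnorm (A *m v) <= opnorm A ^+ 2 * (sqnorm v + e).
  move=> e e0.
  have hp : 0 < sqnorm v + e by apply: ltr_wpDl (sqnorm_ge0 _) e0.
  set s := Num.sqrt (sqnorm v + e).
  have s0 : 0 < s by rewrite sqrtr_gt0.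
  have ss : s ^+ 2 = sqnorm v + e by rewrite sqr_sqrtr // ltW.
  set w := (Complex s^-1 0) *: v.
  have hw : sqnorm w <= 1.
    rewrite /w sqnormZ exprVn ss ler_pdivrMl // mulr1.
    by rewrite lerDl ltW.
  have hA := opnorm_ub A hw.
  move: hA; rewrite /w -scalemxAr sqnormZ exprVn ss => hA.
  have hX : (sqnorm v + e)^-1 * sqnorm (A *m v) <= opnorm A ^+ 2.
    by rewrite -(@ler_sqrt _ _ (opnorm A ^+ 2)) ?sqr_ge0 // sqrtr_sqr ger0_norm.
  have := ler_wpM2l (ltW hp) hX.
  by rewrite mulrA divff ?gt_eqF // mul1r mulrC.
apply/ler_addgt0Pr => e e0.
have [op00|opn0] := eqVneq (opnorm A) 0.
  have := main 1 ltr01; rewrite op00 expr0n /= mul0r => h.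
  rewrite mul0r add0r; exact: le_trans h (ltW e0).
have opp : 0 < opnorm A ^+ 2 by rewrite exprn_gt0 // lt_neqAle eq_sym opn0.
have := main (e / opnorm A ^+ 2) (divr_gt0 e0 opp).
by rewrite mulrDr mulrCA divff ?mulr1 // gt_eqF.
Qed.

End Aux.
Section Aux2.
Variable R : realType.
Local Open Scope ereal_scope.

Lemma esum_scale (T : choiceType) (I : set T) (c : R) (a : T -> \bar R) :
  (0 <= c)%R -> (forall x, 0 <= a x) ->
  \esum_(i in I) (c%:E * a i) <= c%:E * \esum_(i in I) a i.
Proof.
move=> c0 a0; apply: ge_ereal_sup => _ [X [finX XI]] <-.
rewrite fsbig_finite // -ge0_sume_distrr //; apply: lee_wpmul2l; first by rewrite lee_fin.
rewrite -fsbig_finite //; apply: ereal_sup_ubound; exists X => //.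
Qed.

Lemma esum_single (a : R -> \bar R) l :
  (forall x, 0 <= a x) -> (forall x, x != l -> a x = 0) ->
  \esum_(x in [set: R]) a x = a l.
Proof.
move=> a0 ha; rewrite -(@esum_set1 _ _ l a) // [RHS]esum_mkcond.
apply: eq_esum => x _; case: ifPn => //.
move=> nx; apply: ha; apply/eqP => E; by rewrite E mem_set in nx.
Qed.

End Aux2.
Section Aux3.
Variable R : realType.

Lemma key (d0 d1 : R -> nat) (f : forall l : R, 'M[R[i]]_(d1 l, d0 l)) (C t : R) :
  0 < C ->
  (forall l, spectrum d0 l -> spectrum d1 l -> opnorm (f l) < C * expR (t * l)) ->
  forall a (v : fam d0),
  (wnorm2 d1 a (fHilb f v) <= (C ^+ 2)%:E * wnorm2 d0 (a + t) v)%E.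
Proof.
move=> C0 hC a v; rewrite /wnorm2.
have hnn : forall x, (0 <= (expR (2 * (a + t) * x) * sqnorm (v x))%:E)%E.
  by move=> x; rewrite lee_fin mulr_ge0 ?expR_ge0 ?sqnorm_ge0.
apply: le_trans (esum_scale [set: R] (sqr_ge0 C) hnn).
apply: le_esum => l _; rewrite -EFinM lee_fin /fHilb.
have hr : 0 <= C ^+ 2 * (expR (2 * (a + t) * l) * sqnorm (v l)).
  by rewrite mulr_ge0 ?sqr_ge0 // mulr_ge0 ?expR_ge0 ?sqnorm_ge0.
case: (posnP (d0 l)) => [h0|p0].
  by rewrite mul_dim0 // sqnorm0 mulr0.
case: (posnP (d1 l)) => [h1|p1].
  by rewrite (sqnorm_dim0 _ h1) mulr0.
have hop := hC l p0 p1.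
have hb := opnorm_bound (f l) (v l).
have op0 := opnorm_ge0 (f l).
set X := sqnorm (f l *m v l) in hb *; set V := sqnorm (v l) in hb hr *.
set op := opnorm (f l) in hop hb op0 *.
have E : expR (2 * (a + t) * l) = expR (2 * a * l) * expR (t * l) ^+ 2.
  by rewrite expr2 -!expRD; congr expR; ring.
rewrite E.
have h2 : op ^+ 2 <= (C * expR (t * l)) ^+ 2.
  by rewrite !expr2; apply: ler_pM => //; apply: ltW.
have -> : C ^+ 2 * (expR (2 * a * l) * expR (t * l) ^+ 2 * V)
        = expR (2 * a * l) * ((C * expR (t * l)) ^+ 2 * V) by ring.
apply: ler_wpM2l; first exact: expR_ge0.
apply: le_trans hb _; apply: ler_wpM2r => //; exact: sqnorm_ge0.
Qed.

Definition delta (d : R -> nat) (l : R) (w : 'cV[R[i]]_(d l)) : fam d :=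
  fun l' => match l =P l' with
            | ReflectT e => eq_rect l (fun x => 'cV[R[i]]_(d x)) w l' e
            | ReflectF _ => 0 end.

Lemma delta_eq d l (w : 'cV[R[i]]_(d l)) : delta w l = w.
Proof.
rewrite /delta; case: (l =P l) => [e|//].
by rewrite (eq_irrelevance e erefl).
Qed.

Lemma delta_neq d l (w : 'cV[R[i]]_(d l)) l' : l' != l -> delta w l' = 0.
Proof.
move=> nl; rewrite /delta; case: (l =P l') => // e.
by rewrite e eqxx in nl.
Qed.

Lemma wnorm2_delta d l (w : 'cV[R[i]]_(d l)) tau :
  wnorm2 d tau (delta w) = (expR (2 * tau * l) * sqnorm w)%:E.
Proof.
rewrite /wnorm2 (@esum_single _ _ l).
- by rewrite delta_eq.
- by move=> x; rewrite lee_fin mulr_ge0 ?expR_ge0 ?sqnorm_ge0.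
- by move=> x nx; rewrite delta_neq // sqnorm0 mulr0.
Qed.

Lemma wnorm2_fdelta d0 d1 (f : forall l : R, 'M[R[i]]_(d1 l, d0 l)) l
  (w : 'cV[R[i]]_(d0 l)) tau :
  wnorm2 d1 tau (fHilb f (delta w)) = (expR (2 * tau * l) * sqnorm (f l *m w))%:E.
Proof.
rewrite /wnorm2 /fHilb (@esum_single _ _ l).
- by rewrite delta_eq.
- by move=> x; rewrite lee_fin mulr_ge0 ?expR_ge0 ?sqnorm_ge0.
- by move=> x nx; rewrite delta_neq // mulmx0 sqnorm0 mulr0.
Qed.

Lemma spec_lb (d : R -> nat) : discrete_spectral_data d ->
  exists M : R, 0 <= M /\ forall l, spectrum d l -> - l <= M.
Proof.
move=> hd; have fin := hd 0.
set A := [set l | _ /\ _] in fin.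
exists (\sum_(x <- (finmap.enum_fset (fset_set A))) `|x|); split.
  by apply: sumr_ge0 => x _.
move=> l sl; case: (leP l 0) => hl; last first.
  apply: le_trans (_ : 0 <= _); first by rewrite oppr_le0 ltW.
  by apply: sumr_ge0 => x _.
have lA : l \in finmap.enum_fset (fset_set A).
  have := in_fset_set fin l; rewrite (mem_set (_ : A l)); last by split.
  by move=> h; exact: h.
apply: le_trans (ler_norm (- l)) _; rewrite normrN.
rewrite (big_rem l lA) /= lerDl.
by apply: sumr_ge0 => x _.
Qed.

End Aux3.
Theorem lemma3p40 (R : realType) (d0 d1 : R -> nat)
  (hd0 : discrete_spectral_data d0) (hd1 : discrete_spectral_data d1)
  (ne0 : spectrum d0 !=set0) (ne1 : spectrum d1 !=set0)
  (f : forall l : R, 'M[R[i]]_(d1 l, d0 l)) :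
  (exists (fcheck fhat : fam d0 -> fam d1),
      nuclear_pair_morphism fcheck fhat /\
      (forall v, Echeck d0 v -> fHilb f v = fcheck v))
  <->
  (forall t : R, 0 < t -> exists2 C : R, 0 < C &
     forall l : R, spectrum d0 l -> spectrum d1 l ->
       opnorm (f l) < C * expR (t * l)).
Proof.
split.
- move=> [fc [fh [[h1 h2 _ [cc _] _] hf]]] t t0.
  have [tau' tau'0 [C C0 hC]] := cc t t0.
  have [M [M0 hM]] := spec_lb hd0.
  set K := Num.sqrt C * expR (tau' * M).
  have K0 : 0 <= K by rewrite mulr_ge0 ?sqrtr_ge0 ?expR_ge0.
  exists (K + 1); first by rewrite ltr_pwDr.
  move=> l s0 s1.
  have hle : opnorm (f l) <= K * expR (t * l).
    apply: ge_sup.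
      by exists 0, 0; rewrite ?sqnorm0 ?mulmx0 ?sqnorm0 ?sqrtr0.
    move=> _ [v hv ->].
    have E1 : Echeck d0 (delta v).
      by exists 1 => //; rewrite wnorm2_delta ltry.
    have := hC (delta v); rewrite wnorm2_delta -hf // wnorm2_fdelta.
    move=> /(_ (ltry _)); rewrite -EFinM lee_fin => ineq.
    have KK : (K * expR (t * l)) ^+ 2 = C * expR (2 * tau' * M + 2 * t * l).
      rewrite /K !exprMn sqr_sqrtr ?(ltW C0) // !expr2 -!expRD -mulrA -expRD; congr (_ * expR _).
      ring.
    have hX : sqnorm (f l *m v) <= (K * expR (t * l)) ^+ 2.
      rewrite KK.
      have eP := expR_gt0 (2 * tau' * l).
      rewrite -(ler_pM2l eP); apply: le_trans ineq _.
      have -> : expR (2 * tau' * l) * (C * expR (2 * tau' * M + 2 * t * l))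
              = C * (expR (2 * t * l) * expR (2 * tau' * (l + M))).
        by rewrite mulrCA -!expRD; congr (_ * expR _); ring.
      have lM : 0 <= l + M by have := hM l s0; lra.
      have g1 : 1 <= expR (2 * tau' * (l + M)).
        apply: le_trans (expR_ge1Dx _); rewrite lerDl.
        by rewrite mulr_ge0 // mulr_ge0 // ltW.
      apply: ler_wpM2l; first exact: ltW.
      apply: ler_pM; rewrite ?expR_ge0 ?sqnorm_ge0 //.
      exact: le_trans hv g1.
    rewrite -(ger0_norm (mulr_ge0 K0 (expR_ge0 (t * l)))) -sqrtr_sqr ler_sqrt //.
    exact: sqr_ge0.
  apply: le_lt_trans hle _.
  by rewrite mulrDl mul1r ltr_pwDr ?expR_gt0.
- move=> H.
  have lin : forall P, linear_on P (fHilb f).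
    move=> P a u v _ _; apply: functional_extensionality_dep => l.
    by rewrite /fHilb mulmxDr scalemxAr.
  have fin : forall (c : R) (x : \bar R), 0 <= c -> (x < +oo)%E -> (c%:E * x < +oo)%E.
    by move=> c x c0 hx; apply: lte_mul_pinfty.
  exists (fHilb f), (fHilb f); split => //; split.
  + move=> v [tau t0 hv].
    have t2 : 0 < tau / 2 by lra.
    have [C C0 HC] := H (tau / 2) t2.
    exists (tau / 2) => //.
    apply: le_lt_trans (key C0 HC (tau / 2) v) _.
    rewrite (_ : tau / 2 + tau / 2 = tau); last by lra.
    by apply: fin; rewrite ?sqr_ge0.
  + move=> v hv tau' t0.
    have t2 : 0 < tau' / 2 by lra.
    have [C C0 HC] := H (tau' / 2) t2.
    apply: le_lt_trans (key C0 HC (- tau') v) _.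
    rewrite (_ : - tau' + tau' / 2 = - (tau' / 2)); last by lra.
    by apply: fin; rewrite ?sqr_ge0 // hv.
  + by split; apply: lin.
  + split.
    * move=> tau t0.
      have t2 : 0 < tau / 2 by lra.
      have [C C0 HC] := H (tau / 2) t2.
      exists (tau / 2) => //; exists (C ^+ 2); first by rewrite exprn_gt0.
      move=> v _; have := key C0 HC (tau / 2) v.
      by rewrite (_ : tau / 2 + tau / 2 = tau); last by lra.
    * move=> tau' t0.
      have t2 : 0 < tau' / 2 by lra.
      have [C C0 HC] := H (tau' / 2) t2.
      exists (tau' / 2) => //; exists (C ^+ 2); first by rewrite exprn_gt0.
      move=> v _; have := key C0 HC (- tau') v.
      by rewrite (_ : - tau' + tau' / 2 = - (tau' / 2)); last by lra.
  + by [].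
Qed.
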